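(* Let $r,k\in\mathbb Z$ with $0\le k\le r$ and suppose Assumption (A1) holds. Then for every $\hat v\in C^{k_{\mathcal J}+1}([-1,1])$ the conditions (J1)–(J3) below determine a unique polynomial $\widehat{\mathcal J}\hat v\in P_r([-1,1])$, i.e. $\widehat{\mathcal J}$ is well defined. Moreover, if $\widehat{\mathcal I}$ preserves polynomials up to degree $\tilde r$ (i.e. $\widehat{\mathcal I}p=p$ for all $p\in P_{\tilde r}([-1,1])$), then $\widehat{\mathcal J}$ preserves polynomials up to degree $\min\{\tilde r+1,r\}$.
   Context: $P_s(J)$ denotes polynomials of degree at most $s$ on $J$; $\delta_{i,j}$ is the Kronecker symbol; $\lfloor\cdot\rfloor$ is the floor function (so $\lfloor (k-1)/2\rfloor=-1$ for $k=0$); sums with upper limit below the lower limit are empty. $\widehat{\mathscr I}$ is a linear functional (the reference integrator) and $\widehat{\mathcal I}$ a linear operator (the reference approximation operator); $k_{\mathscr I}\ge0$ and $k_{\mathcal I}\ge0$ are the smallest integers such that $\widehat{\mathscr I}$ is well defined on $C^{k_{\mathscr I}}([-1,1])$ and $\widehat{\mathcal I}$ is well defined on $C^{k_{\mathcal I}}([-1,1])$; moreover $\widehat{\mathcal I}\hat v\in C^{l}([-1,1])$ whenever $\hat v\in C^{\max\{k_{\mathcal I},l\}}([-1,1])$. Set $k_{\mathcal J}:=\max\{\lfloor k/2\rfloor-1,k_{\mathscr I},k_{\mathcal I}\}$. Assumption (A1): whenever $\hat\psi\in P_{r-\max\{1,k\}}([-1,1])$ satisfies $\widehat{\mathscr I}\big[(1-\hat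 t)^{\lfloor k/2\rfloor}(1+\hat t)^{|\lfloor (k-1)/2\rfloor|}\hat\psi\,\hat\varphi\big]=0$ for all $\hat\varphi\in P_{r-\max\{1,k\}}([-1,1])$, then $\hat\psi\equiv0$. Definition of $\widehat{\mathcal J}\hat v\in P_r([-1,1])$: (J1) if $k\ge1$: $(\widehat{\mathcal J}\hat v)^{(i)}(-1)=\hat v^{(i)}(-1)$ for $i=0,\dots,\lfloor (k-1)/2\rfloor$; (J2) if $k\ge2$: $(\widehat{\mathcal J}\hat v)^{(i)}(1)=\hat v^{(i)}(1)$ for $i=1,\dots,\lfloor k/2\rfloor$; (J3) $\widehat{\mathscr I}[(\widehat{\mathcal J}\hat v)'\hat\varphi]+\delta_{0,k}(\widehat{\mathcal J}\hat v)(-1)\hat\varphi(-1)=\widehat{\mathscr I}[(\widehat{\mathcal I}(\hat v'))\hat\varphi]+\delta_{0,k}\hat v(-1)\hat\varphi(-1)$ for all $\hat\varphi\in P_{r-k}([-1,1])$. *)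

(* Defs.v *)
From HB Require Import structures.
From mathcomp Require Import all_boot all_order all_algebra.
From mathcomp Require Import all_classical all_reals all_analysis.
Import numFieldNormedType.Exports.
Set Implicit Arguments. Unset Strict Implicit. Unset Printing Implicit Defensive.
Import Order.TTheory GRing.Theory Num.Theory.
Local Open Scope ring_scope.

Section Defs.
Variable R : realType.

(* P_s([-1,1]) for s : int ; P_s = {0} when s < 0. *)
Definition inP (s : int) (q : {poly R}) : Prop := ((size q)%:Z <= s + 1)%R.

(* C^k([-1,1]), identified (Whitney/Seeley extension) with restrictions of
   functions that are k times continuously differentiable on R. *)
Definition Ck (k : nat) (f : R -> R) : Prop :=
  (forall n, (n < k)%N -> forall x : R, derivable (derive1n n f) x 1)
  /\ (forall x : R, {for x, continuous (derive1n k f : R -> R)}).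

Definition onI (x : R) : Prop := -1 <= x <= 1.

Definition fl_k2 (k : nat) : nat := (k %/ 2)%N.
Definition fl_km1_2 (k : nat) : int := ((k%:Z - 1) %/ 2)%Z.

(* k_J = max{floor(k/2) - 1, k_scriptI, k_calI} (nat truncation of
   floor(k/2)-1 is harmless since the other two are >= 0) *)
Definition kJ (k kI kcI : nat) : nat := maxn (fl_k2 k - 1) (maxn kI kcI).

Definition integrator_ok (kI : nat) (Iint : (R -> R) -> R) : Prop :=
  (forall f g (a : R), Ck kI f -> Ck kI g ->
      Iint (fun t => f t + a * g t) = Iint f + a * Iint g)
  /\ (forall f g, (forall x, onI x -> f x = g x) -> Iint f = Iint g).

Definition approx_ok (kcI : nat) (Iop : (R -> R) -> (R -> R)) : Prop :=
  (forall f g (a : R), Ck kcI f -> Ck kcI g -> forall x, onI x ->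
      Iop (fun t => f t + a * g t) x = Iop f x + a * Iop g x)
  /\ (forall f g, (forall x, onI x -> f x = g x) ->
        forall x, onI x -> Iop f x = Iop g x)
  /\ (forall (l : nat) f, Ck (maxn kcI l) f -> Ck l (Iop f)).

Definition A1 (r k : nat) (Iint : (R -> R) -> R) : Prop :=
  forall psi : {poly R}, inP (r%:Z - (maxn 1 k)%:Z) psi ->
   (forall phi : {poly R}, inP (r%:Z - (maxn 1 k)%:Z) phi ->
      Iint (fun t => (1 - t) ^+ fl_k2 k * (1 + t) ^+ `|fl_km1_2 k|%N
                     * psi.[t] * phi.[t]) = 0) ->
   psi = 0.

(* q satisfies (J1)-(J3) for v, and q in P_r: "q = Jhat v". *)
Definition IsJ (r k : nat) (Iint : (R -> R) -> R) (Iop : (R -> R) -> (R -> R))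
    (v : R -> R) (q : {poly R}) : Prop :=
  inP r%:Z q
  /\ ((1 <= k)%N -> forall i : nat, (i%:Z <= fl_km1_2 k)%R ->
        (derivn i q).[-1] = derive1n i v (-1))
  /\ ((2 <= k)%N -> forall i : nat, (1 <= i)%N -> (i <= fl_k2 k)%N ->
        (derivn i q).[1] = derive1n i v 1)
  /\ (forall phi : {poly R}, inP (r%:Z - k%:Z) phi ->
        Iint (fun t => (deriv q).[t] * phi.[t])
          + (k == 0%N)%:R * q.[-1] * phi.[-1]
        = Iint (fun t => Iop (derive1 v) t * phi.[t])
          + (k == 0%N)%:R * v (-1) * phi.[-1]).

End Defs.

(* Main.v *)
Require Import Defs.
From HB Require Import structures.
From mathcomp Require Import all_boot all_order all_algebra.
From mathcomp Require Import ring lra zify.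
From mathcomp Require Import all_classical all_reals all_analysis.
Import Order.TTheory GRing.Theory Num.Theory numFieldNormedType.Exports.
Local Open Scope ring_scope.

Lemma CkS (R : realType) k (f : R -> R) :
  Ck k.+1 f <-> (forall x, derivable f x 1) /\ Ck k (derive1 f).
Proof.
rewrite /Ck; split.
- move=> [H1 H2]; split; first by move=> x; exact: (H1 0%N).
  split; last by move=> x; rewrite -derive1Sn; exact: H2.
  by move=> n nk x; rewrite -derive1Sn; apply: H1.
- move=> [H0 [H1 H2]]; split; last by move=> x; rewrite derive1Sn; exact: H2.
  case=> [|n] nk x; first exact: H0.
  by rewrite derive1Sn; apply: H1.
Qed.

Lemma derivable_cont (R : realType) (f : R -> R) x :
  derivable f x 1 -> {for x, continuous f}.
Proof. by move=> h; apply/differentiable_continuous/derivable1_diffP. Qed.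

Lemma Ck_le (R : realType) m k (f : R -> R) : (m <= k)%N -> Ck k f -> Ck m f.
Proof.
move=> mk [H1 H2]; split.
  by move=> n nm; apply: H1; apply: leq_trans mk.
move=> x; move: mk; rewrite leq_eqVlt => /orP[/eqP->|mk]; first exact: H2.
exact/derivable_cont/H1.
Qed.

Lemma derive1n_horner (R : realType) n (p : {poly R}) :
  derive1n n (horner p) = horner (derivn n p).
Proof.
elim: n p => [|n IH] p; first by rewrite derive1n0 derivn0.
by rewrite derive1Sn derivSn -derivE IH.
Qed.

Lemma Ck_poly (R : realType) k (p : {poly R}) : Ck k (horner p).
Proof.
elim: k p => [|k IH] p.
  split => // x; rewrite derive1n0; exact: continuous_horner.
apply/CkS; split; first by move=> x; exact: derivable_horner.
by rewrite -derivE.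
Qed.

Lemma Ck_polyfun (R : realType) k (p : {poly R}) (f : R -> R) :
  (forall t, f t = p.[t]) -> Ck k f.
Proof.
move=> h; have -> : f = horner p by apply/funext => t; rewrite h.
exact: Ck_poly.
Qed.

Lemma CkD (R : realType) k (f g : R -> R) :
  Ck k f -> Ck k g -> Ck k (fun t => f t + g t).
Proof.
elim: k f g => [|k IH] f g.
  move=> [_ Hf] [_ Hg]; split => // x; rewrite derive1n0.
  by apply: continuousD; [have := Hf x|have := Hg x]; rewrite derive1n0.
move=> /CkS[df Hf] /CkS[dg Hg]; apply/CkS; split.
  by move=> x; exact: (derivableD (df x) (dg x)).
have -> : derive1 (fun t => f t + g t) = (fun t => derive1 f t + derive1 g t).
  apply/funext => x; rewrite !derive1E.
  exact: (deriveD (df x) (dg x)).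
exact: IH.
Qed.

Lemma CkM (R : realType) k (f g : R -> R) :
  Ck k f -> Ck k g -> Ck k (fun t => f t * g t).
Proof.
elim: k f g => [|k IH] f g.
  move=> [_ Hf] [_ Hg]; split => // x; rewrite derive1n0.
  by apply: continuousM; [have := Hf x|have := Hg x]; rewrite derive1n0.
move=> Cf Cg; have := Cf => /CkS[df Hf]; have := Cg => /CkS[dg Hg].
apply/CkS; split.
  by move=> x; exact: (derivableM (df x) (dg x)).
have -> : derive1 (fun t => f t * g t) =
   (fun t => f t * derive1 g t + derive1 f t * g t).
  apply/funext => x; rewrite !derive1E.
  rewrite (deriveM (df x) (dg x)) /=; rewrite [_ *: 'D_1 f x]mulrC //.
apply: CkD; apply: IH => //; exact: Ck_le Cf || exact: Ck_le Cg.
Qed.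
Lemma derivn_mulXsubC (R : realType) i (Q : {poly R}) c :
  derivn i.+1 (Q * ('X - c%:P)) = derivn i.+1 Q * ('X - c%:P) + derivn i Q *+ i.+1.
Proof.
elim: i => [|i IH].
  by rewrite derivn1 derivn0 derivM derivXsubC mulr1 mulr1n.
rewrite derivnS IH derivD derivM derivXsubC mulr1 derivMn -!derivnS.
by rewrite -addrA (mulrS _ i.+1).
Qed.

Lemma vanish_dvd (R : realType) m (p : {poly R}) c :
  (forall i, (i < m)%N -> (derivn i p).[c] = 0) -> ('X - c%:P)^+m %| p.
Proof.
elim: m p => [|m IH] p h; first by rewrite expr0 dvd1p.
have : root p c by apply/eqP; have := h 0%N isT; rewrite derivn0.
move/factor_theorem => [Q pQ]; rewrite pQ in h *.
rewrite exprSr; apply: dvdp_mul => //; apply: IH => i im.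
have := h i.+1 im; rewrite derivn_mulXsubC hornerD hornerM hornerMn.
rewrite !hornerE subrr mulr0 add0r => /eqP; rewrite mulrn_eq0 /=.
by move/eqP.
Qed.

Lemma deriv0_const (R : realType) (d : {poly R}) : d^`() = 0 -> d = (d`_0)%:P.
Proof.
move=> h; apply/polyP => i; rewrite coefC; case: i => [|i] //=.
have := congr1 (fun p : {poly R} => p`_i) h; rewrite coef_deriv coef0 => /eqP.
by rewrite mulrn_eq0 /= => /eqP.
Qed.

Lemma Iint0 (R : realType) kI (Iint : (R -> R) -> R) :
  integrator_ok kI Iint -> Iint (fun _ => 0) = 0.
Proof.
move=> [lin _].
have C0 : Ck kI (fun _ : R => (0:R)) by apply: (@Ck_polyfun R kI 0) => t; rewrite horner0.
have E : (fun t:R => (0:R) + 1 * 0) = (fun=> 0) by apply/funext=> t; rewrite mul1r addr0.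
have := lin _ _ 1 C0 C0; rewrite E mul1r; lra.
Qed.
Lemma fl_pos (k : nat) : (1 <= k)%N -> fl_km1_2 k = ((k.-1) %/ 2)%N%:Z.
Proof. rewrite /fl_km1_2 => h; lia. Qed.

Lemma core (R : realType) r k kI (Iint : (R -> R) -> R) :
  (k <= r)%N -> integrator_ok kI Iint -> A1 r k Iint ->
  forall d : {poly R}, inP r%:Z d ->
  ((1 <= k)%N -> forall i : nat, (i%:Z <= fl_km1_2 k)%R -> (derivn i d).[-1] = 0) ->
  ((2 <= k)%N -> forall i : nat, (1 <= i)%N -> (i <= fl_k2 k)%N -> (derivn i d).[1] = 0) ->
  (forall phi : {poly R}, inP (r%:Z - k%:Z) phi ->
     Iint (fun t => (deriv d).[t] * phi.[t]) + (k == 0%N)%:R * d.[-1] * phi.[-1] = 0) ->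
  d = 0.
Proof.
move=> kr Iok HA1 d dr HJ1 HJ2 HJ3.
have sD : (size d^`() <= r)%N.
  rewrite /inP in dr; have : (size d <= r.+1)%N by lia.
  have [->|dn0] := eqVneq d 0; first by rewrite deriv0 size_poly0.
  by move=> h; have := lt_size_deriv dn0; lia.
have D0 : d^`() = 0.
  case: k kr HA1 HJ1 HJ2 HJ3 => [|k] kr HA1 HJ1 HJ2 HJ3.
  - apply: HA1; first by rewrite /inP; lia.
    move=> phi hphi.
    have E : (fun t => (1 - t) ^+ fl_k2 0 * (1 + t) ^+ `|fl_km1_2 0|%N * d^`().[t] * phi.[t])
           = (fun t => d^`().[t] * (('X + 1) * phi).[t]).
      apply/funext => t /=; rewrite /fl_k2 /= expr0 expr1 hornerM hornerD hornerX hornerC; ring.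
    rewrite E; have := HJ3 (('X + 1) * phi).
    rewrite hornerM hornerD hornerX hornerC addNr mul0r mulr0 => h.
    rewrite -[LHS]addr0; apply: h.
    rewrite /inP in hphi *; have := size_mul_leq ('X + 1) phi.
    rewrite size_XaddC; lia.
  - set a := fl_k2 k.+1; set b := (k %/ 2)%N.
    have flk : fl_km1_2 k.+1 = b%:Z by rewrite fl_pos.
    have hb : forall i, (i < b)%N -> (derivn i d^`()).[-1] = 0.
      move=> i hi; rewrite -derivSn; apply: HJ1 => //; rewrite flk; lia.
    have ha : forall i, (i < a)%N -> (derivn i d^`()).[1] = 0.
      move=> i hi; rewrite -derivSn; apply: HJ2; rewrite /a /fl_k2 in hi *; lia.
    have d1 := @vanish_dvd R _ _ _ ha.
    have d2 := @vanish_dvd R _ _ _ hb.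
    have cop : coprimep ((('X - 1%:P) : {poly R})^+a) (('X - (-1)%:P)^+b).
      apply: coprimep_expl; apply: coprimep_expr; rewrite coprimep_XsubC /root !hornerE.
      apply/negP => /eqP; lra.
    set A := ((('X - 1%:P) : {poly R})^+a) * (('X - (-1)%:P)^+b).
    have dA : A %| d^`() by rewrite Gauss_dvdp // d1 d2.
    have DA := divpK dA.
    set psi0 := d^`() %/ A in DA.
    have An0 : A != 0.
      by apply: monic_neq0; rewrite monicMl ?monic_exp ?monicXsubC.
    have sA : size A = (a + b).+1.
      rewrite size_mul ?size_exp_XsubC //; try by rewrite -size_poly_eq0 size_exp_XsubC.
      by rewrite addnS.
    have s1 : (-1 : R) ^+ a != 0 by rewrite expf_neq0 // oppr_eq0 oner_eq0.
    have key : forall t, (1 - t)^+a * (1 + t)^+b * ((-1)^+a *: psi0).[t] = d^`().[t].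
      move=> t; rewrite -DA hornerZ hornerM /A hornerM !horner_exp !hornerXsubC.
      have -> : (1 - t)^+a = (-1)^+a * (t - 1)^+a by rewrite -exprMn mulN1r opprB.
      have ss : ((-1 : R)^+a) * (-1)^+a = 1 by rewrite -exprMn mulrNN mulr1 expr1n.
      transitivity (((-1 : R)^+a * (-1)^+a) * ((t-1)^+a * (1 + t)^+b * psi0.[t])); first ring.
      rewrite ss mul1r; have -> : t - -1 = 1 + t by ring.
      ring.
    have psi0z : (-1)^+a *: psi0 = 0.
      apply: HA1.
        rewrite /inP size_scale //.
        have [->|pn0] := eqVneq psi0 0; first by rewrite size_poly0; lia.
        have : size d^`() = (size psi0 + size A).-1.
          by rewrite -DA size_mul.
        rewrite sA; have : ((a + b) = k)%N by rewrite /a /b /fl_k2; lia.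
        have -> : maxn 1 k.+1 = k.+1 by apply/maxn_idPr. rewrite addnS /=; clear -sD; move=> h1 h2; clearbody psi0 A a b. move: (size psi0) h2 => n h2. rewrite h2 in sD. lia.
      move=> phi hphi; rewrite flk absz_nat.
      have E : (fun t => (1 - t) ^+ fl_k2 k.+1 * (1 + t) ^+ b * ((-1)^+a *: psi0).[t] * phi.[t])
             = (fun t => d^`().[t] * phi.[t]).
        by apply/funext => t; rewrite -key.
      rewrite E; have := HJ3 phi; rewrite /= mul0r mul0r addr0; apply.
      rewrite /inP in hphi *; lia.
    move: psi0z => /eqP; rewrite scaler_eq0 (negbTE s1) /= => /eqP p0.
    by rewrite -DA p0 mul0r.
have dc := @deriv0_const R d D0.
rewrite dc; congr (_%:P).
have -> : d`_0 = d.[-1] by rewrite {2}dc hornerC.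
case: k kr HA1 HJ1 HJ2 HJ3 => [|k] kr HA1 HJ1 HJ2 HJ3.
- have := HJ3 1; rewrite D0.
  have -> : (fun t : R => (0 : {poly R}).[t] * (1 : {poly R}).[t]) = (fun=> 0).
    by apply/funext => t; rewrite horner0 mul0r.
  rewrite (@Iint0 R kI Iint Iok) add0r hornerC mulr1 mul1r; apply.
  rewrite /inP size_poly1; lia.
- by have := HJ1 isT 0%N; rewrite derivn0; apply; rewrite fl_pos //; lia.
Qed.

Definition lfun {R : realType} (k : nat) (Iint : (R -> R) -> R) (m : nat) (q : {poly R}) : R :=
  if (m < (k.+1)%/2)%N then (derivn m q).[-1]
  else if (m < k)%N then (derivn (m - (k.+1)%/2).+1 q).[1]
  else Iint (fun t => (deriv q).[t] * ('X^(m - k)).[t])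
       + (k == 0%N)%:R * q.[-1] * ('X^(m-k)).[-1].

Definition tgen {R : realType} (k : nat) (a1 a2 : nat -> R) (F : {poly R} -> R) (m : nat) : R :=
  if (m < (k.+1)%/2)%N then a1 m
  else if (m < k)%N then a2 (m - (k.+1)%/2).+1 else F ('X^(m-k)).

Definition linF {R : realType} (G : {poly R} -> R) :=
  forall p1 p2 a, G (p1 + a *: p2) = G p1 + a * G p2.

Lemma lin_sum {R : realType} (G : {poly R} -> R) : linF G ->
  forall n (c : nat -> R), G (\sum_(j < n) c j *: 'X^j) = \sum_(j < n) c j * G 'X^j.
Proof.
move=> lG.
have G0 : G 0 = 0.
  have := lG 0 0 1; rewrite scale1r addr0 mul1r => h.
  by move: h; lra.
elim=> [|n IH] c; first by rewrite !big_ord0.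
by rewrite !big_ord_recr /= lG IH.
Qed.

Lemma poly_expand {R : realType} (p : {poly R}) n :
  (size p <= n)%N -> p = \sum_(j < n) p`_j *: 'X^j.
Proof.
move=> sp; rewrite -poly_def; apply/polyP => i; rewrite coef_poly.
case: ifP => // /negbT; rewrite -leqNgt => ni.
by rewrite nth_default //; apply: leq_trans ni.
Qed.

Lemma lin_phi {R : realType} kI (Iint : (R -> R) -> R) (h : R -> R) (c : R) :
  integrator_ok kI Iint -> Ck kI h ->
  linF (fun phi : {poly R} => Iint (fun t => h t * phi.[t]) + c * phi.[-1]).
Proof.
move=> [lin _] Ch p1 p2 a /=.
have E : (fun t => h t * (p1 + a *: p2).[t]) = (fun t => h t * p1.[t] + a * (h t * p2.[t])).
  by apply/funext => t; rewrite hornerD hornerZ; ring.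
rewrite E lin; first by rewrite hornerD hornerZ; ring.
  by apply: CkM => //; exact: Ck_poly.
by apply: CkM => //; exact: Ck_poly.
Qed.

Lemma lin_l {R : realType} k kI (Iint : (R -> R) -> R) m :
  integrator_ok kI Iint -> linF (lfun k Iint m).
Proof.
move=> [lin _] p1 p2 a; rewrite /lfun.
case: ifP => _; first by rewrite derivnD derivnZ hornerD hornerZ.
case: ifP => _; first by rewrite derivnD derivnZ hornerD hornerZ.
set X := 'X^(m - k) : {poly R}.
have E : (fun t => (p1 + a *: p2)^`().[t] * X.[t])
       = (fun t => p1^`().[t] * X.[t] + a * (p2^`().[t] * X.[t])).
  by apply/funext => t; rewrite derivD derivZ hornerD hornerZ; ring.
rewrite E lin; first by rewrite hornerD hornerZ; ring.
  by apply: (@Ck_polyfun R kI (p1^`() * X)) => t; rewrite hornerM.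
by apply: (@Ck_polyfun R kI (p2^`() * X)) => t; rewrite hornerM.
Qed.

Lemma conds_Jgen (R : realType) r k kI (Iint : (R -> R) -> R) (a1 a2 : nat -> R)
    (F : {poly R} -> R) (q : {poly R}) :
  (k <= r)%N -> integrator_ok kI Iint -> linF F ->
  (forall m, (m < r.+1)%N -> lfun k Iint m q = tgen k a1 a2 F m) ->
  ((1 <= k)%N -> forall i : nat, (i%:Z <= fl_km1_2 k)%R -> (derivn i q).[-1] = a1 i)
  /\ ((2 <= k)%N -> forall i : nat, (1 <= i)%N -> (i <= fl_k2 k)%N -> (derivn i q).[1] = a2 i)
  /\ (forall phi : {poly R}, inP (r%:Z - k%:Z) phi ->
        Iint (fun t => (deriv q).[t] * phi.[t]) + (k == 0%N)%:R * q.[-1] * phi.[-1]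
        = F phi).
Proof.
move=> kr Iok lF H; split; [|split].
- move=> k1 i hi; rewrite fl_pos // in hi.
  have := H i; rewrite /lfun /tgen.
  have -> : (i < (k.+1) %/ 2)%N by lia.
  by apply; lia.
- move=> k2 i i1 ik; rewrite /fl_k2 in ik.
  have := H ((k.+1)%/2 + i.-1)%N; rewrite /lfun /tgen.
  have -> : ((k.+1)%/2 + i.-1 < (k.+1) %/ 2)%N = false by lia.
  have -> : ((k.+1)%/2 + i.-1 < k)%N by lia.
  have -> : ((k.+1)%/2 + i.-1 - (k.+1) %/ 2).+1 = i by lia.
  by apply; lia.
- move=> phi hphi.
  have sp : (size phi <= r - k + 1)%N by rewrite /inP in hphi; lia.
  rewrite (@poly_expand R phi _ sp).
  have l1 := @lin_phi R kI Iint (fun t => (deriv q).[t]) ((k == 0%N)%:R * q.[-1])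
    Iok (Ck_poly _ _ _).
  have e1 := lin_sum _ l1 (r - k + 1)%N (fun j => phi`_j).
  have e2 := lin_sum _ lF (r - k + 1)%N (fun j => phi`_j).
  cbv beta in e1, e2; rewrite e1 e2; apply: eq_bigr => j _; congr (_ * _).
  have := H (k + j)%N; rewrite /lfun /tgen.
  have -> : (k + j < (k.+1) %/ 2)%N = false by lia.
  have -> : (k + j < k)%N = false by lia.
  rewrite addKn; apply; have := ltn_ord j; lia.
Qed.

Lemma inP_poly {R : realType} n (E : nat -> R) : inP n%:Z (\poly_(i < n.+1) E i).
Proof. rewrite /inP; have := size_poly n.+1 E; move: (size _) => m; lia. Qed.

Theorem mainTheorem1 (R : realType) (r k kI kcI : nat)
    (Iint : (R -> R) -> R) (Iop : (R -> R) -> (R -> R)) :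
  (k <= r)%N ->
  integrator_ok kI Iint ->
  approx_ok kcI Iop ->
  A1 r k Iint ->
  (forall v : R -> R, Ck (kJ k kI kcI).+1 v ->
     exists! q : {poly R}, IsJ r k Iint Iop v q)
  /\
  (forall rt : nat,
     (forall p : {poly R}, inP rt%:Z p ->
        forall x : R, onI x -> Iop (fun t => p.[t]) x = p.[x]) ->
     forall p : {poly R}, inP (minn rt.+1 r)%:Z p ->
       forall q : {poly R}, IsJ r k Iint Iop (fun t => p.[t]) q -> q = p).
Proof.
move=> kr Iok Aok HA1.
have uniq : forall v q1 q2, IsJ r k Iint Iop v q1 -> IsJ r k Iint Iop v q2 -> q1 = q2.
  move=> v q1 q2 [s1 [a1 [b1 c1]]] [s2 [a2 [b2 c2]]].
  apply/eqP; rewrite -subr_eq0; apply/eqP.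
  apply: (@core R r k kI Iint kr Iok HA1).
  - rewrite /inP in s1 s2 *; have h := size_polyD q1 (-q2); rewrite size_polyN in h.
    move: h s1 s2; set n1 := size q1; set n2 := size q2; set n3 := size _; lia.
  - by move=> k1 i hi; rewrite derivnB hornerD hornerN a1 // a2 // subrr.
  - by move=> k2 i i1 ik; rewrite derivnB hornerD hornerN b1 // b2 // subrr.
  - move=> phi hphi; have e1 := c1 phi hphi; have e2 := c2 phi hphi.
    have E : (fun t => (q1 - q2)^`().[t] * phi.[t])
           = (fun t => q1^`().[t] * phi.[t] + (-1) * (q2^`().[t] * phi.[t])).
      by apply/funext => t; rewrite derivB hornerD hornerN; ring.
    rewrite E Iok.1; last first.
    + by apply: (@Ck_polyfun R kI (q2^`() * phi)) => t; rewrite hornerM.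
    + by apply: (@Ck_polyfun R kI (q1^`() * phi)) => t; rewrite hornerM.
    rewrite hornerD hornerN.
    move: e1 e2.
    set A := Iint (fun t => q1^`().[t] * phi.[t]).
    set B := Iint (fun t => q2^`().[t] * phi.[t]).
    set X := Iint _.
    set dl := (k == 0%N)%:R; move=> e1 e2.
    transitivity ((A + dl * q1.[-1] * phi.[-1]) - (B + dl * q2.[-1] * phi.[-1])); first ring.
    by rewrite e1 e2 subrr.
split.
- move=> v Cv.
  have Cg : Ck kI (Iop (derive1 v)).
    apply: Aok.2.2; have := (CkS _ _ _).1 Cv => -[_ C']; apply: Ck_le C'.
    rewrite /kJ; lia.
  pose FR := fun phi : {poly R} =>
    Iint (fun t => Iop (derive1 v) t * phi.[t]) + ((k == 0%N)%:R * v (-1)) * phi.[-1].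
  have lFR : linF FR := @lin_phi R kI Iint _ _ Iok Cg.
  pose a1 := fun i => derive1n i v (-1).
  pose a2 := fun i => derive1n i v 1.
  pose M : 'M[R]_(r.+1) := \matrix_(j, i) lfun k Iint i ('X^j).
  pose polyOf (c : 'rV[R]_(r.+1)) := \poly_(j < r.+1) c 0 (inord j).
  have polyOfE : forall c (i : 'I_r.+1), (c *m M) 0 i = lfun k Iint i (polyOf c).
    move=> c i; rewrite mxE /polyOf poly_def.
    have e := lin_sum _ (@lin_l R k kI Iint i Iok) r.+1 (fun j => c 0 (inord j)).
    cbv beta in e; rewrite e; apply: eq_bigr => j _; rewrite mxE inord_val //.
  have Minj : M \in unitmx.
    rewrite -row_free_unit; apply: inj_row_free => c hc.
    have lz : linF (fun _ : {poly R} => 0 : R) by move=> *; rewrite mulr0 addr0.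
    have hz : forall m, (m < r.+1)%N -> lfun k Iint m (polyOf c)
        = tgen k (fun _ => 0) (fun _ => 0) (fun _ => 0) m.
      move=> m hm; rewrite -(polyOfE c (Ordinal hm)) hc mxE /tgen.
      by case: ifP => _ //; case: ifP.
    have [J1 [J2 J3]] := @conds_Jgen R r k kI Iint (fun _ => 0) (fun _ => 0) (fun _ => 0)
            (polyOf c) kr Iok lz hz.
    have q0 : polyOf c = 0.
      apply: (@core R r k kI Iint kr Iok HA1) => //; exact: inP_poly.
    apply/rowP => j; have := congr1 (fun p : {poly R} => p`_j) q0.
    by rewrite coef_poly ltn_ord inord_val coef0 ?mxE => ->; rewrite ?mxE.
  pose b : 'rV[R]_(r.+1) := \row_i tgen k a1 a2 FR i.
  pose c := b *m invmx M.
  have cM : c *m M = b by rewrite /c mulmxKV.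
  have J := @conds_Jgen R r k kI Iint a1 a2 FR (polyOf c) kr Iok lFR _.
  have Hc : IsJ r k Iint Iop v (polyOf c).
    have J' : forall m, (m < r.+1)%N -> lfun k Iint m (polyOf c) = tgen k a1 a2 FR m.
      by move=> m hm; rewrite -(polyOfE c (Ordinal hm)) cM mxE.
    have [h1 [h2 h3]] := J J'.
    split; last by split; [exact: h1| split; [exact: h2| exact: h3]].
    exact: inP_poly.
  exists (polyOf c); split => // q' hq'; exact: uniq Hc hq'.
- move=> rt Hrt p hp q hq; apply: (uniq _ _ _ hq).
  split; [|split; [|split]].
  + by rewrite /inP in hp *; lia.
  + by move=> k1 i hi; rewrite derive1n_horner.
  + by move=> k2 i i1 ik; rewrite derive1n_horner.
  + move=> phi hphi; congr (_ + _); apply: Iok.2 => x hx.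
    have -> : derive1 (fun t => p.[t]) = horner p^`() by rewrite derivE.
    rewrite (Hrt p^`()) //.
    have [->|pn0] := eqVneq p 0; first by rewrite deriv0 /inP size_poly0.
    have := lt_size_deriv pn0; rewrite /inP in hp *; lia.
Qed.
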